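(* Let $\Pi_q$ be a projective plane (not necessarily Desarguesian) of order $q$, let $\mu\ge 2$ be an integer, and let $s_\mu(2,q)$ be the smallest size of a $(1,\mu)$-saturating set in $\Pi_q$. Put $\delta=1/\sqrt{(q+1)\ln(q+1)}$. Then \[ s_\mu(2,q)\le 2D\sqrt{(q+1)\ln(q+1)}+2 \] holds in each of the following cases: (a) $D=2.4$, if $\mu=2$ and $q\ge 97$; (b) $D=2.6$, if $\mu=3$ and $q\ge 181$; (c) $D=2.8$, if $\mu=4$ and $q\ge 125$; (d) $D=\mu+1$, if $\mu\le\sqrt{q}$ and $q\ge 4$; (e) $D=2\mu-1$, if $\mu\le \frac12\big((1-\delta)q-\delta+1\big)+1$ and $q\ge 3$.
   Context: A point set $S\subset\Pi_q$ is $(1,\mu)$-saturating if for every point $Q\in\Pi_q\setminus S$ the number of secants of $S$ through $Q$, counted with multiplicity, is at least $\mu$, where a line $\ell$ meeting $S$ in at least two points is a secant and has multiplicity $\binom{\#(\ell\cap S)}{2}$. Here $\ln$ is the natural logarithm. *)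

(* Defs.v *)
From mathcomp Require Import all_boot.
From Stdlib Require Import Reals.
Set Implicit Arguments. Unset Strict Implicit. Unset Printing Implicit Defensive.

Section Plane.
Variables (P L : finType) (inc : P -> L -> bool).

Definition pts (l : L) : {set P} := [set p | inc p l].

Definition is_projective_plane : Prop :=
  (forall p1 p2 : P, p1 != p2 -> #|[set l | inc p1 l && inc p2 l]| = 1%N) /\
  (forall l1 l2 : L, l1 != l2 -> #|[set p | inc p l1 && inc p l2]| = 1%N) /\
  (exists f : 'I_4 -> P, injective f /\
     forall (i j k : 'I_4), i != j -> j != k -> i != k ->
       ~ (exists l, [&& inc (f i) l, inc (f j) l & inc (f k) l])).

Definition has_order (q : nat) : Prop := forall l : L, #|pts l| = q.+1.

(* (1,mu)-saturating: every point off S lies on secants of S whose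
   multiplicities 'C(#(l ∩ S), 2) sum to at least mu (lines meeting S in
   fewer than 2 points contribute 'C(_,2) = 0). *)
Definition saturating (mu : nat) (S : {set P}) : bool :=
  [forall Q in ~: S, (mu <= \sum_(l : L | inc Q l) 'C(#|pts l :&: S|, 2))%N].

(* s_mu(2,q): smallest size of a (1,mu)-saturating set
   (the full point set is always saturating, so the default #|P| is harmless) *)
Definition s_mu (mu : nat) : nat :=
  \big[minn/#|P|]_(S : {set P} | saturating mu S) #|S|.
End Plane.

Definition bound_D (q : nat) (D : R) : R :=
  (2 * D * sqrt (INR (q + 1) * ln (INR (q + 1))) + 2)%R.

Definition delta_q (q : nat) : R :=
  (1 / sqrt (INR (q + 1) * ln (INR (q + 1))))%R.

(* Main.v *)
Require Import Defs.
From mathcomp Require Import all_boot zify.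
Set Implicit Arguments. Unset Strict Implicit. Unset Printing Implicit Defensive.

Lemma card1_pick (T : finType) (Pr : pred T) d :
  #|[set x | Pr x]| = 1 ->
  Pr (odflt d [pick x | Pr x]) /\ forall y, Pr y -> y = odflt d [pick x | Pr x].
Proof.
move=> h.
have /cards1P [x hx] : #|[set x | Pr x]| == 1 by rewrite h.
have hPr y : Pr y = (y == x) by rewrite -in_set1 -hx inE.
case: pickP => [z hz | hn] /=.
  split=> // y hy; rewrite hPr in hz; rewrite hPr in hy; by rewrite (eqP hy) (eqP hz).
by move: (hn x); rewrite hPr eqxx.
Qed.

Section Geo.
Variables (P L : finType) (inc : P -> L -> bool).
Hypothesis ax1 : forall p1 p2 : P, p1 != p2 -> #|[set l | inc p1 l && inc p2 l]| = 1%N.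
Hypothesis ax2 : forall l1 l2 : L, l1 != l2 -> #|[set p | inc p l1 && inc p l2]| = 1%N.
Variables (l0 : L) (p0 : P).

Definition lineof p1 p2 := odflt l0 [pick l | inc p1 l && inc p2 l].
Definition meet l1 l2 := odflt p0 [pick p | inc p l1 && inc p l2].

Lemma line_inc p1 p2 : p1 != p2 -> inc p1 (lineof p1 p2) && inc p2 (lineof p1 p2).
Proof. by move=> h; case: (card1_pick l0 (ax1 h)). Qed.

Lemma line_uniq p1 p2 l : p1 != p2 -> inc p1 l -> inc p2 l -> l = lineof p1 p2.
Proof. move=> h h1 h2; case: (card1_pick l0 (ax1 h)) => _; apply; by rewrite h1. Qed.

Lemma meet_inc l1 l2 : l1 != l2 -> inc (meet l1 l2) l1 && inc (meet l1 l2) l2.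
Proof. by move=> h; case: (card1_pick p0 (ax2 h)). Qed.

Lemma meet_uniq l1 l2 p : l1 != l2 -> inc p l1 -> inc p l2 -> p = meet l1 l2.
Proof. move=> h h1 h2; case: (card1_pick p0 (ax2 h)) => _; apply; by rewrite h1. Qed.

Lemma pts_eq l1 l2 x y : l1 != l2 -> inc x l1 -> inc x l2 -> inc y l1 -> inc y l2 -> x = y.
Proof. by move=> h *; rewrite (@meet_uniq _ _ x h) // (@meet_uniq _ _ y h). Qed.

Lemma lines_eq p1 p2 l l' : p1 != p2 -> inc p1 l -> inc p2 l -> inc p1 l' -> inc p2 l' -> l = l'.
Proof. by move=> h *; rewrite (@line_uniq _ _ l h) // (@line_uniq _ _ l' h). Qed.

Definition pr c l x := meet (lineof c x) l.

Lemma pr_prop c l x : c != x -> ~~ inc c l ->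
  [/\ inc (pr c l x) l, inc (pr c l x) (lineof c x), c != pr c l x
    & lineof c (pr c l x) = lineof c x].
Proof.
move=> hcx hcl.
have /andP [i1 i2] := line_inc hcx.
have hne : lineof c x != l by apply: contraNneq hcl => <-.
have /andP [j1 j2] := meet_inc hne.
have hcp : c != pr c l x by apply: contraNneq hcl => ->.
split => //.
by rewrite -(line_uniq hcp i1 j1).
Qed.


Lemma sum_ge_term Q S l : inc Q l ->
  'C(#|pts inc l :&: S|, 2) <= \sum_(l' : L | inc Q l') 'C(#|pts inc l' :&: S|, 2).
Proof. by move=> h; rewrite (bigD1 l) //= leq_addr. Qed.

Variables (l1 l2 : L).
Hypothesis h12 : l1 != l2.

Lemma sat_AB mu (A B : {set P}) :
  A \subset pts inc l1 :\ meet l1 l2 -> B \subset pts inc l2 ->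
  mu <= 'C(#|A|, 2) -> mu <= 'C(#|B|, 2) ->
  (forall Q, ~~ inc Q l1 -> ~~ inc Q l2 -> mu <= #|[set a in A | pr Q l2 a \in B]|) ->
  saturating inc mu (A :|: B).
Proof.
move=> hA hB cA cB hQ.
apply/forallP => Q; apply/implyP => _.
have [q1|nq1] := boolP (inc Q l1).
  apply: leq_trans cA _; apply: leq_trans _ (sum_ge_term _ q1).
  apply: leq_bin2l; apply: subset_leq_card; apply/subsetP => a aA.
  move: (subsetP hA a aA); rewrite /pts !inE aA /= andbT => /andP [_ ->] //.
have [q2|nq2] := boolP (inc Q l2).
  apply: leq_trans cB _; apply: leq_trans _ (sum_ge_term _ q2).
  apply: leq_bin2l; apply: subset_leq_card; apply/subsetP => a aB.
  move: (subsetP hB a aB); rewrite /pts !inE aB orbT andbT //.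
apply: leq_trans (hQ Q nq1 nq2) _.
set A' := [set a in A | pr Q l2 a \in B].
have hA'P a : a \in A' -> [/\ a \in A, pr Q l2 a \in B, inc a l1 & a != meet l1 l2].
  rewrite inE => /andP [aA aB]; move: (subsetP hA a aA); rewrite /pts !inE.
  by case/andP => -> ->.
have Qa a : a \in A' -> Q != a.
  by case/hA'P => _ _ al1 _; apply: contraNneq nq1 => ->.
have inj : {in A' &, injective (lineof Q)}.
  move=> a a' ha ha' e.
  have /andP [_ i1] := line_inc (Qa _ ha).
  have /andP [_ i2] := line_inc (Qa _ ha').
  have hne : lineof Q a != l1.
    by apply: contraNneq nq1 => <-; case/andP: (line_inc (Qa _ ha)).
  case/hA'P: ha => _ _ j1 _; case/hA'P: ha' => _ _ j2 _.
  by apply: (pts_eq hne) => //; rewrite e.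
rewrite -(card_in_imset inj) -sum1_card.
rewrite [X in _ <= X](bigID (mem (lineof Q @: A'))) /=; apply: leq_trans _ (leq_addr _ _).
rewrite [X in _ <= X](eq_bigl (mem (lineof Q @: A'))); last first.
  move=> l /=; apply/andP/idP => [[] //|h]; split => //.
  case/imsetP: h => a ha ->.
  by case/andP: (line_inc (Qa _ ha)).
apply: leq_sum => l /imsetP [a ha ->].
rewrite bin_gt0.
case: (pr_prop (Qa _ ha) nq2) => prl2 prl _ _.
have [aA aB al1 aO] := hA'P _ ha.
have hne : a != pr Q l2 a.
  apply: contraNneq aO => e.
  by rewrite (meet_uniq h12 al1) // e.
have <- : #|[set a; pr Q l2 a]| = 2 by rewrite cards2 hne.
apply: subset_leq_card; apply/subsetP => x; rewrite !inE => /orP [] /eqP ->.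
  by case/andP: (line_inc (Qa _ ha)) => _ ->; rewrite aA.
by rewrite prl aB orbT.
Qed.

End Geo.
Lemma ext_subset (T : finType) (X Y : {set T}) n :
  X \subset Y -> #|X| <= n <= #|Y| ->
  exists J : {set T}, [/\ X \subset J, J \subset Y & #|J| = n].
Proof.
move eqd : (n - #|X|) => d.
elim: d X eqd => [|d IH] X eqd sXY /andP [h1 h2].
  exists X; split => //; lia.
have : 0 < #|Y :\: X| by rewrite cardsD (setIidPr sXY); lia.
case/card_gt0P => y; rewrite inE => /andP [yX yY].
have [|||J [s1 s2 s3]] := IH (y |: X).
- rewrite cardsU1 yX /=; lia.
- by rewrite subUset sub1set yY.
- rewrite cardsU1 yX /=; apply/andP; split => //; lia.
exists J; split => //.
by apply: subset_trans s1; apply: subsetUr.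
Qed.

Lemma card_cover (I T : finType) (X : {set T}) (Js : {set I}) (F : I -> {set T}) :
  (forall x, x \in X -> exists2 j, j \in Js & x \in F j) ->
  #|X| <= \sum_(j in Js) #|F j|.
Proof.
move=> hc.
rewrite -sum1_card.
apply: (@leq_trans (\sum_(x in X) \sum_(j in Js) (x \in F j : nat))).
  apply: leq_sum => x xX; case: (hc x xX) => j jJ xF.
  by rewrite (bigD1 j) //= xF.
rewrite exchange_big /=; apply: leq_sum => j _.
apply: (@leq_trans (\sum_x (x \in F j : nat))).
  by rewrite [X in _ <= X](bigID (mem X)) /= leq_addr.
rewrite -sum1_card [X in _ <= X]big_mkcond /=; apply: leq_sum => i _.
by case: (i \in F j).
Qed.

Lemma count_bad (T : finType) (U Tq : {set T}) k m :
  Tq \subset U -> #|Tq| = k -> m <= k ->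
  #|[set B : {set T} | [&& B \subset U, #|B| == k & #|B :&: Tq| <= m]]|
    <= 'C(k, m) * 'C(#|U| - k + m, k).
Proof.
move=> sTU cT mk.
apply: leq_trans (@card_cover _ _ _ [set J : {set T} | J \subset Tq & #|J| == m]
   (fun J => [set B : {set T} | B \subset (U :\: Tq) :|: J & #|B| == k]) _) _.
  move=> B; rewrite inE => /and3P [sBU cB cBT].
  have [|J [s1 s2 s3]] := @ext_subset _ (B :&: Tq) Tq m (subsetIr _ _).
    by rewrite cBT cT mk.
  exists J; first by rewrite inE s2 s3 eqxx.
  rewrite inE cB andbT; apply/subsetP => x xB.
  rewrite !inE; case xT: (x \in Tq) => /=.
    by apply: (subsetP s1); rewrite inE xB xT.
  by rewrite (subsetP sBU).
rewrite (eq_bigr (fun _ => 'C(#|U| - k + m, k))); last first.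
  move=> J; rewrite inE => /andP [sJ /eqP cJ].
  rewrite cards_draws cardsU cardsD (setIidPr sTU) cT cJ.
  suff -> : #|(U :\: Tq) :&: J| = 0 by rewrite subn0.
  apply/eqP; rewrite cards_eq0; apply/eqP/setP => x; rewrite !inE.
  case xJ: (x \in J); last by rewrite andbF.
  by rewrite (subsetP sJ x xJ).
by rewrite sum_nat_const cards_draws cT.
Qed.

Lemma avg (T0 T : finType) (U : {set T}) (Qs : {set T0}) (Tf : T0 -> {set T}) k m :
  (forall Q, Q \in Qs -> Tf Q \subset U /\ #|Tf Q| = k) -> m <= k ->
  #|Qs| * ('C(k, m) * 'C(#|U| - k + m, k)) < 'C(#|U|, k) ->
  exists B : {set T}, [/\ B \subset U, #|B| = k & forall Q, Q \in Qs -> m < #|B :&: Tf Q|].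
Proof.
move=> hT mk hlt.
set Bs := [set B : {set T} | B \subset U & #|B| == k].
have [/existsP [B /andP [hB /forallP hall]]|hno] :=
  boolP [exists B, (B \in Bs) && [forall Q, (Q \in Qs) ==> (m < #|B :&: Tf Q|)]].
  move: hB; rewrite inE => /andP [sBU /eqP cB].
  exists B; split => // Q QQ; exact: (implyP (hall Q) QQ).
exfalso; move: hlt; apply/negP; rewrite -leqNgt.
rewrite -cards_draws.
apply: leq_trans (@card_cover _ _ Bs Qs
   (fun Q => [set B : {set T} | [&& B \subset U, #|B| == k & #|B :&: Tf Q| <= m]]) _) _.
  move=> B hB.
  move: hno; rewrite negb_exists => /forallP /(_ B); rewrite hB /= negb_forall.
  case/existsP => Q; rewrite negb_imply => /andP [QQ]; rewrite -leqNgt => hle.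
  exists Q => //; move: hB; rewrite !inE => /andP [-> ->] /=; exact: hle.
rewrite -sum_nat_const; apply: leq_sum => Q QQ.
case: (hT Q QQ) => s c.
exact: count_bad.
Qed.

Lemma ffact_ratio n' N k : n' <= N -> n' ^_ k * N ^ k <= N ^_ k * n' ^ k.
Proof.
move=> hn; elim: k => [|k IH]; first by rewrite !ffactn0 !expn0.
rewrite !ffactnSr !expnSr.
have h : (n' - k) * N <= (N - k) * n'.
  have [kn|nk] := leqP k n'.
    rewrite mulnBl mulnBl mulnC leq_sub2l // leq_mul2l hn orbT //.
  by rewrite (_ : n' - k = 0) //; apply/eqP; rewrite subn_eq0 ltnW.
have -> : n' ^_ k * (n' - k) * (N ^ k * N) = (n' ^_ k * N ^ k) * ((n' - k) * N) by lia.
have -> : N ^_ k * (N - k) * (n' ^ k * n') = (N ^_ k * n' ^ k) * ((N - k) * n') by lia.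
exact: leq_mul.
Qed.

Lemma bin_ratio n' N k : n' <= N -> 'C(n', k) * N ^ k <= 'C(N, k) * n' ^ k.
Proof.
move=> hn; rewrite -(leq_pmul2r (fact_gt0 k)).
by rewrite mulnAC bin_ffact [X in _ <= X]mulnAC bin_ffact ffact_ratio.
Qed.

Lemma ffact_le_exp k m : k ^_ m <= k ^ m.
Proof.
elim: m => [|m IH]; first by rewrite ffactn0 expn0.
by rewrite ffactnSr expnSr leq_mul // leq_subr.
Qed.

Lemma bin_le_exp k m : 'C(k, m) <= k ^ m.
Proof.
apply: leq_trans (ffact_le_exp k m); rewrite -bin_ffact.
by rewrite leq_pmulr // fact_gt0.
Qed.

Lemma combine N k m q0 : 0 < N -> m <= k -> k <= N -> q0 <= N * N ->
  N ^ m.+2 * (N - k + m) ^ k < N ^ k ->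
  q0 * ('C(k, m) * 'C(N - k + m, k)) < 'C(N, k).
Proof.
move=> N0 mk kN hq hlt.
have hn' : N - k + m <= N by lia.
have Nk : 0 < N ^ k by rewrite expn_gt0 N0.
rewrite -(ltn_pmul2r Nk).
apply: (@leq_ltn_trans ('C(N, k) * (N ^ m.+2 * (N - k + m) ^ k))); last first.
  by rewrite ltn_pmul2l // bin_gt0.
rewrite -mulnA -mulnA.
have e : 'C(N, k) * (N ^ m.+2 * (N - k + m) ^ k) =
   (N * N) * (N ^ m * ('C(N, k) * (N - k + m) ^ k)).
  rewrite !expnS; lia.
rewrite e; apply: leq_mul => //; apply: leq_mul.
  apply: leq_trans (bin_le_exp k m) _; case: (m) => [|ee]; [by rewrite !expn0 | by rewrite leq_exp2r].
exact: bin_ratio.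
Qed.

Lemma s_mu_le (P L : finType) (inc : P -> L -> bool) mu (S : {set P}) :
  saturating inc mu S -> s_mu inc mu <= #|S|.
Proof.
move=> hS; rewrite /s_mu.
have : S \in index_enum {set P} by rewrite mem_index_enum.
elim: (index_enum _) => [//|S0 r IH]; rewrite inE big_cons.
case/orP => [/eqP <-|hr]; first by rewrite hS geq_minl.
case: (saturating inc mu S0); last exact: IH.
by apply: leq_trans (geq_minr _ _) (IH hr).
Qed.

Section Main.
Variables (P L : finType) (inc : P -> L -> bool).
Hypothesis ax1 : forall p1 p2 : P, p1 != p2 -> #|[set l | inc p1 l && inc p2 l]| = 1%N.
Hypothesis ax2 : forall l1 l2 : L, l1 != l2 -> #|[set p | inc p l1 && inc p l2]| = 1%N.
Variables (l0 : L) (p0 : P) (q : nat).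
Hypothesis hord : has_order inc q.
Variables (l1 l2 : L).
Hypothesis h12 : l1 != l2.
Local Notation O := (meet inc p0 l1 l2).
Local Notation pr := (pr inc l0 p0).
Local Notation lineof := (lineof inc l0).

Lemma O_l1 : inc O l1. Proof. by case/andP: (meet_inc ax2 p0 h12). Qed.
Lemma O_l2 : inc O l2. Proof. by case/andP: (meet_inc ax2 p0 h12). Qed.

Lemma cardA : #|pts inc l1 :\ O| = q.
Proof.
have := cardsD1 O (pts inc l1); rewrite hord.
by rewrite /pts inE O_l1 add1n => [[]].
Qed.

Lemma Qoff_a Q a : ~~ inc Q l1 -> a \in pts inc l1 :\ O -> Q != a.
Proof. by move=> nq; rewrite /pts !inE => /andP [_ al]; apply: contraNneq nq => ->. Qed.

Lemma prA Q a : ~~ inc Q l1 -> ~~ inc Q l2 -> a \in pts inc l1 :\ O -> inc (pr Q l2 a) l2.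
Proof. by move=> n1 n2 ha; case: (pr_prop ax1 ax2 l0 p0 (Qoff_a n1 ha) n2). Qed.

Lemma sat_AB' mu (A B : {set P}) :
  A \subset pts inc l1 :\ O -> B \subset pts inc l2 ->
  mu <= 'C(#|A|, 2) -> mu <= 'C(#|B|, 2) ->
  (forall Q, ~~ inc Q l1 -> ~~ inc Q l2 -> mu <= #|[set a in A | pr Q l2 a \in B]|) ->
  s_mu inc mu <= #|A| + #|B|.
Proof.
move=> hA hB cA cB hQ; apply: leq_trans (s_mu_le (sat_AB ax1 ax2 h12 hA hB cA cB hQ)) _.
by rewrite cardsU leq_subr.
Qed.

Lemma bin2_ge mu k : mu < k -> mu <= 'C(k, 2).
Proof.
move=> h; apply: leq_trans (leq_bin2l 2 h).
by rewrite binS bin1 leq_addl.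
Qed.

Lemma full_case mu : mu <= q -> 3 <= q -> s_mu inc mu <= q.*2.+1.
Proof.
move=> mq q3.
have aux n : 3 <= n -> n <= 'C(n, 2).
  case: n => [|[|[|r]]] // _; rewrite binS bin1.
  have : 0 < 'C(r.+2, 2) by rewrite bin_gt0.
  lia.
have cq : mu <= 'C(q, 2) by apply: leq_trans mq (aux _ q3).
have -> : q.*2.+1 = #|pts inc l1 :\ O| + #|pts inc l2| by rewrite cardA hord; lia.
apply: (sat_AB' (subxx _) (subxx _)).
- by rewrite cardA.
- rewrite hord; apply: leq_trans (aux _ _); lia.
move=> Q n1 n2; apply: leq_trans mq _; rewrite -[X in X <= _]cardA.
apply: subset_leq_card; apply/subsetP => a ha.
by rewrite inE ha /pts inE prA.
Qed.

Lemma ZW_exist : 2 <= q ->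
  exists Z W, [/\ inc Z l2, inc W l2, Z != W, ~~ inc Z l1 & ~~ inc W l1].
Proof.
move=> q2.
have c2 : #|pts inc l2 :\ O| = q.
  have := cardsD1 O (pts inc l2); rewrite hord.
  by rewrite /pts inE O_l2 add1n => [[]].
have : 0 < #|pts inc l2 :\ O| by rewrite c2; lia.
case/card_gt0P => Z hZ.
have : 0 < #|(pts inc l2 :\ O) :\ Z|.
  by have := cardsD1 Z (pts inc l2 :\ O); rewrite hZ c2; lia.
case/card_gt0P => W hW.
move: hZ hW; rewrite /pts !inE => /andP [ZO Zl] /and3P [WZ WO Wl].
have notl1 X : X != O -> inc X l2 -> ~~ inc X l1.
  move=> XO Xl; apply: contra XO => Xl1; apply/eqP.
  exact: (meet_uniq ax2 p0 h12).
exists Z, W; split => //; last by apply: notl1.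
- by rewrite eq_sym.
- by apply: notl1.
Qed.

Variables (Z W : P).
Hypotheses (Zl2 : inc Z l2) (Wl2 : inc W l2) (ZW : Z != W)
  (Zl1 : ~~ inc Z l1) (Wl1 : ~~ inc W l1).

Definition Qs := [set Q | ~~ inc Q l1 && ~~ inc Q l2].

Lemma card_Qs : #|Qs| <= q.+1 * q.+1.
Proof.
have Zne Q : Q \in Qs -> Z != Q.
  by rewrite inE => /andP [_ n2]; apply: contraNneq n2 => <-.
have Wne Q : Q \in Qs -> W != Q.
  by rewrite inE => /andP [_ n2]; apply: contraNneq n2 => <-.
pose g Q := (pr Z l1 Q, pr W l1 Q).
have inj : {in Qs &, injective g}.
  move=> Q Q' hQ hQ' [e1 e2].
  case: (pr_prop ax1 ax2 l0 p0 (Zne _ hQ) Zl1) => _ _ _ z1.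
  case: (pr_prop ax1 ax2 l0 p0 (Zne _ hQ') Zl1) => _ _ _ z2.
  case: (pr_prop ax1 ax2 l0 p0 (Wne _ hQ) Wl1) => _ _ _ w1.
  case: (pr_prop ax1 ax2 l0 p0 (Wne _ hQ') Wl1) => _ _ _ w2.
  have eZ : lineof Z Q = lineof Z Q' by rewrite -z1 -z2 e1.
  have eW : lineof W Q = lineof W Q' by rewrite -w1 -w2 e2.
  have /andP [iZ1 iZ2] := line_inc ax1 l0 (Zne _ hQ).
  have /andP [iZ1' iZ2'] := line_inc ax1 l0 (Zne _ hQ').
  have /andP [iW1 iW2] := line_inc ax1 l0 (Wne _ hQ).
  have /andP [iW1' iW2'] := line_inc ax1 l0 (Wne _ hQ').
  have hne : lineof Z Q != lineof W Q.
    apply/eqP => e.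
    have : lineof Z Q = l2.
      by apply: (lines_eq ax1 l0 ZW) => //; rewrite e.
    move=> e'; move: hQ; rewrite inE -e' iZ2 andbF //.
  apply: (pts_eq ax2 p0 hne) => //; first by rewrite eZ.
  by rewrite eW.
rewrite -(card_in_imset inj) -(hord l1) -cardsX.
apply: subset_leq_card; apply/subsetP => x /imsetP [Q hQ ->].
rewrite inE /= /pts !inE.
case: (pr_prop ax1 ax2 l0 p0 (Zne _ hQ) Zl1) => -> _ _ _.
by case: (pr_prop ax1 ax2 l0 p0 (Wne _ hQ) Wl1) => -> _ _ _.
Qed.

Lemma gen_case mu k : 0 < mu -> mu < k -> k <= q ->
  (q.+1 * q.+1) * ('C(k, mu.-1) * 'C(q.+1 - k + mu.-1, k)) < 'C(q.+1, k) ->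
  s_mu inc mu <= k.*2.
Proof.
move=> mu0 muk kq hlt.
have [|A [_ sA cA]] := @ext_subset _ set0 (pts inc l1 :\ O) k (sub0set _).
  by rewrite cards0 cardA.
pose Tf Q := pr Q l2 @: A.
have hT Q : Q \in Qs -> Tf Q \subset pts inc l2 /\ #|Tf Q| = k.
  rewrite inE => /andP [n1 n2]; split.
    apply/subsetP => x /imsetP [a ha ->].
    by rewrite /pts inE prA // (subsetP sA).
  rewrite card_in_imset // => a a' ha ha' e.
  have ha1 := subsetP sA _ ha; have ha1' := subsetP sA _ ha'.
  case: (pr_prop ax1 ax2 l0 p0 (Qoff_a n1 ha1) n2) => _ _ _ z1.
  case: (pr_prop ax1 ax2 l0 p0 (Qoff_a n1 ha1') n2) => _ _ _ z2.
  have el : lineof Q a = lineof Q a' by rewrite -z1 -z2 e.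
  have /andP [_ i1] := line_inc ax1 l0 (Qoff_a n1 ha1).
  have /andP [_ i2] := line_inc ax1 l0 (Qoff_a n1 ha1').
  have hne : lineof Q a != l1.
    by apply: contraNneq (n1) => <-; case/andP: (line_inc ax1 l0 (Qoff_a n1 ha1)).
  move: ha1 ha1'; rewrite /pts !inE => /andP [_ j1] /andP [_ j2].
  by apply: (pts_eq ax2 p0 hne) => //; rewrite el.
have [||B [sB cB hB]] := @avg _ _ (pts inc l2) Qs Tf k mu.-1 hT.
- lia.
- rewrite hord; apply: leq_ltn_trans hlt; rewrite leq_mul2r card_Qs orbT //.
have -> : k.*2 = #|A| + #|B| by rewrite cA cB; lia.
apply: sat_AB' => //; try by [rewrite ?cA ?cB; apply: bin2_ge].
move=> Q n1 n2.
have QQ : Q \in Qs by rewrite inE n1 n2.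
have := hB Q QQ; rewrite prednK // => h; apply: leq_trans h _.
apply: leq_trans (leq_imset_card (pr Q l2) _).
apply: subset_leq_card; apply/subsetP => x; rewrite inE => /andP [xB /imsetP [a ha ex]].
by apply/imsetP; exists a => //; rewrite inE ha -ex xB.
Qed.

End Main.

Lemma setup (P L : finType) (inc : P -> L -> bool) :
  is_projective_plane inc ->
  exists (l0 : L) (p0 : P) (l1 l2 : L), l1 != l2.
Proof.
case=> ax1 [ax2 [f [finj hnc]]].
have n01 : f ord0 != f (@Ordinal 4 1 isT) by apply/eqP => /finj.
have /card_gt0P [l0 _] : 0 < #|[set l | inc (f ord0) l && inc (f (@Ordinal 4 1 isT)) l]|.
  by rewrite ax1.
have n23 : f (@Ordinal 4 2 isT) != f (@Ordinal 4 3 isT) by apply/eqP => /finj.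
exists l0, (f ord0), (lineof inc l0 (f ord0) (f (@Ordinal 4 1 isT))),
  (lineof inc l0 (f (@Ordinal 4 2 isT)) (f (@Ordinal 4 3 isT))).
apply/eqP => e.
apply: (hnc ord0 (@Ordinal 4 1 isT) (@Ordinal 4 2 isT)) => //.
exists (lineof inc l0 (f ord0) (f (@Ordinal 4 1 isT))).
case/andP: (line_inc ax1 l0 n01) => -> -> /=.
by rewrite e; case/andP: (line_inc ax1 l0 n23).
Qed.

Lemma nat_full (P L : finType) (inc : P -> L -> bool) q mu :
  is_projective_plane inc -> has_order inc q -> mu <= q -> 3 <= q ->
  s_mu inc mu <= q.*2.+1.
Proof.
move=> pp hord mq q3.
case: (setup pp) => l0 [p0 [l1 [l2 h12]]].
case: pp => ax1 [ax2 _].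
exact: (full_case ax1 ax2 l0 p0 hord h12).
Qed.

Lemma nat_gen (P L : finType) (inc : P -> L -> bool) q mu k :
  is_projective_plane inc -> has_order inc q -> 3 <= q -> 0 < mu -> mu < k -> k <= q ->
  (q.+1 * q.+1) * ('C(k, mu.-1) * 'C(q.+1 - k + mu.-1, k)) < 'C(q.+1, k) ->
  s_mu inc mu <= k.*2.
Proof.
move=> pp hord q3 mu0 muk kq hlt.
case: (setup pp) => l0 [p0 [l1 [l2 h12]]].
case: pp => ax1 [ax2 _].
have [|Z [W [Zl2 Wl2 ZW Zl1 Wl1]]] := ZW_exist ax2 p0 hord h12; first by lia.
exact: (gen_case ax1 ax2 l0 p0 hord h12 Zl2 Wl2 ZW Zl1 Wl1 mu0 muk kq hlt).
Qed.
From Stdlib Require Import Reals Lra.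
From Stdlib Require ZArith.

Lemma INR_addn a b : INR (addn a b) = (INR a + INR b)%R.
Proof. exact: plus_INR. Qed.
Lemma INR_muln a b : INR (muln a b) = (INR a * INR b)%R.
Proof. exact: mult_INR. Qed.
Lemma INR_subn a b : (b <= a)%N -> INR (subn a b) = (INR a - INR b)%R.
Proof. by move/leP => h; exact: minus_INR. Qed.
Lemma INR_expn a b : INR (expn a b) = (INR a ^ b)%R.
Proof.
elim: b => [|b IH]; first by rewrite expn0.
by rewrite expnS INR_muln IH.
Qed.

Lemma ln_le_sub1 y : (0 < y)%R -> (ln y <= y - 1)%R.
Proof. move=> hy; have := exp_ineq1_le (ln y); rewrite exp_ln //; lra. Qed.

Lemma key_ineq (N k m : nat) : (k < N)%N -> (m <= k)%N ->
  (INR m.+2 * ln (INR N) < INR k * (INR k - INR m) / INR N)%R ->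
  (muln (expn N m.+2) (expn (addn (subn N k) m) k) < expn N k)%N.
Proof.
move=> kN mk h.
apply/ltP; apply: INR_lt.
rewrite INR_muln !INR_expn INR_addn INR_subn; last exact: ltnW.
set n := INR N; set a := INR k; set b := INR m.
have n0 : (0 < n)%R by apply: lt_0_INR; apply/ltP; apply: leq_ltn_trans kN.
have an : (a < n)%R by apply: lt_INR; apply/ltP.
have b0 : (0 <= b)%R by apply: pos_INR.
have ba : (b <= a)%R by apply: le_INR; apply/leP.
have y0 : (0 < n - a + b)%R by lra.
apply: ln_lt_inv.
- apply: Rmult_lt_0_compat; apply: pow_lt => //.
- by apply: pow_lt.
rewrite ln_mult; try (apply: pow_lt => //).
rewrite !ln_pow //.
have hl : (ln (n - a + b) <= ln n - (a - b) / n)%R.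
  have e : (n - a + b = n * ((n - a + b) / n))%R by field; lra.
  have q0 : (0 < (n - a + b) / n)%R by apply: Rdiv_lt_0_compat.
  rewrite e ln_mult //; have := ln_le_sub1 q0.
  have -> : ((n - a + b) / n - 1 = - ((a - b) / n))%R by field; lra.
  lra.
have k0 : (0 <= a)%R by apply: pos_INR.
have := Rmult_le_compat_l _ _ _ k0 hl.
have -> : (a * (ln n - (a - b) / n) = a * ln n - a * (a - b) / n)%R by field; lra.
rewrite -/n -/a -/b in h.
rewrite -/a.
lra.
Qed.

Lemma core (n a b D L : R) : (0 < n)%R -> (0 <= b)%R -> (0 <= a <= n)%R -> (0 <= D)%R ->
  (0 <= n * L)%R -> (D * sqrt (n * L) <= a)%R -> (b < (D ^ 2 - b - 2) * L)%R ->
  ((b + 2) * L < a * (a - b) / n)%R.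
Proof.
move=> n0 b0 [a0 an] D0 nL0 hx hb.
have s0 : (0 <= sqrt (n * L))%R by apply: sqrt_pos.
have sq : (sqrt (n * L) * sqrt (n * L) = n * L)%R by apply: sqrt_sqrt.
have x0 : (0 <= D * sqrt (n * L))%R by apply: Rmult_le_pos.
have aa : (D ^ 2 * (n * L) <= a * a)%R.
  have := Rmult_le_compat _ _ _ _ x0 x0 hx hx.
  have -> : (D * sqrt (n * L) * (D * sqrt (n * L)) = D ^ 2 * (sqrt (n * L) * sqrt (n * L)))%R by ring.
  by rewrite sq.
have ab : (a * b <= n * b)%R by apply: Rmult_le_compat_r.
apply: (Rmult_lt_reg_r n) => //.
have -> : (a * (a - b) / n * n = a * a - a * b)%R by field; lra.
nra.
Qed.

Lemma ln_ge1 (n : R) : (3 <= n)%R -> (1 <= ln n)%R.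
Proof.
move=> h; have e3 := exp_le_3.
have e0 : (0 < exp 1)%R by apply: exp_pos.
rewrite -{1}(ln_exp 1).
case: (Rle_lt_or_eq_dec _ _ (Rle_trans _ _ _ e3 h)) => [hl|<-]; last lra.
by left; apply: ln_increasing.
Qed.

Lemma ln_ge2 (n : R) : (9 <= n)%R -> (2 <= ln n)%R.
Proof.
move=> h; have e3 := exp_le_3.
have e0 : (0 < exp 1)%R by apply: exp_pos.
have e2 : (exp 2 <= 9)%R.
  have -> : (2 = 1 + 1)%R by ring.
  rewrite exp_plus; nra.
rewrite -{1}(ln_exp 2).
case: (Rle_lt_or_eq_dec _ _ (Rle_trans _ _ _ e2 h)) => [hl|<-]; last lra.
by left; apply: ln_increasing => //; apply: exp_pos.
Qed.

Lemma INR_pred m : (0 < m)%N -> INR m.-1 = (INR m - 1)%R.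
Proof. by case: m => // m _; rewrite S_INR /=; ring. Qed.

Theorem generic (P L : finType) (inc : P -> L -> bool) (q mu : nat) (D : R) :
  is_projective_plane inc -> has_order inc q -> (2 <= mu)%N -> (mu <= q)%N -> (3 <= q)%N ->
  (0 <= D)%R ->
  (INR mu + 1 <= D * sqrt (INR (addn q 1) * ln (INR (addn q 1))))%R ->
  (INR mu.-1 < (D ^ 2 - INR mu.-1 - 2) * ln (INR (addn q 1)))%R ->
  (INR (s_mu inc mu) <= bound_D q D)%R.
Proof.
move=> pp hord mu2 muq q3 D0 hx hb.
rewrite /bound_D.
rewrite addn1 in hx hb *.
set n := INR q.+1 in hx hb *.
have nq : n = (INR q + 1)%R by rewrite /n S_INR.
have q3R : (3 <= INR q)%R by have := le_INR 3 q (elimT leP q3); rewrite /=; lra.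
have L1 : (1 <= ln n)%R by apply: ln_ge1; lra.
have nL0 : (0 <= n * ln n)%R by nra.
set x := (D * sqrt (n * ln n))%R in hx *.
have x0 : (0 <= x)%R by apply: Rmult_le_pos => //; apply: sqrt_pos.
have -> : (2 * D * sqrt (n * ln n) + 2 = 2 * x + 2)%R by rewrite /x; ring.
case: (Rle_lt_dec (INR q) x) => hqx.
  have := nat_full pp hord muq q3 => /leP /le_INR.
  rewrite -mul2n S_INR INR_muln /=; lra.
have [up1 up2] := archimed x.
have upos : (0 <= up x)%Z.
  apply: le_IZR; lra.
set k := Z.to_nat (up x).
have ek : INR k = IZR (up x) by rewrite INR_IZR_INZ Znat.Z2Nat.id.
have muk : (mu < k)%N by apply/ltP; apply: INR_lt; lra.
have kq : (k <= q)%N.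
  have : (k < q.+1)%N by apply/ltP; apply: INR_lt; rewrite S_INR; lra.
  by [].
have mu0 : (0 < mu)%N by apply: leq_trans mu2.
have b0 : (0 <= INR mu.-1)%R by apply: pos_INR.
have mk : (mu.-1 <= k)%N by apply: leq_trans (leq_pred mu) (ltnW muk).
have kN : (k < q.+1)%N by [].
have KEY := @key_ineq q.+1 k mu.-1 kN mk.
have kn : (INR k <= n)%R by rewrite nq; have := le_INR _ _ (elimT leP kq); lra.
have n0 : (0 < n)%R by lra.
have k0 : (0 <= INR k)%R by apply: pos_INR.
have hc := @core n (INR k) (INR mu.-1) D (ln n) n0 b0 (conj k0 kn) D0 nL0.
have hyp : (INR (mu.-1).+2 * ln (INR q.+1) < INR k * (INR k - INR mu.-1) / INR q.+1)%R.
  rewrite -/n S_INR S_INR.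
  have -> : (INR mu.-1 + 1 + 1 = INR mu.-1 + 2)%R by ring.
  apply: hc => //.
  rewrite ek -/x; lra.
have KEY2 := KEY hyp.
have hlt := @combine q.+1 k mu.-1 (muln q.+1 q.+1) isT mk (ltnW kN) (leqnn _) KEY2.
have hs := @nat_gen _ _ inc q mu k pp hord q3 mu0 muk kq hlt.
have := le_INR _ _ (elimT leP hs).
rewrite -mul2n INR_muln /=; lra.
Qed.

Lemma facts q : (3 <= q)%N ->
  (1 <= ln (INR (addn q 1)))%R /\ (2 <= sqrt (INR (addn q 1) * ln (INR (addn q 1))))%R
  /\ (4 <= INR (addn q 1))%R.
Proof.
move=> q3.
have q3R : (3 <= INR q)%R by have := le_INR 3 q (elimT leP q3); rewrite /=; lra.
rewrite addn1 S_INR.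
have L1 : (1 <= ln (INR q + 1))%R by apply: ln_ge1; lra.
split => //; split; last lra.
have -> : (2 = sqrt (2 * 2))%R by rewrite sqrt_square; lra.
apply: sqrt_le_1_alt; nra.
Qed.

Lemma nat_le_of_R (a b : nat) : (INR a <= INR b)%R -> (a <= b)%N.
Proof. by move/INR_le/leP. Qed.

Theorem theorem3 (P L : finType) (inc : P -> L -> bool) (q mu : nat) :
  is_projective_plane inc -> has_order inc q -> (2 <= mu)%N ->
  let s := INR (s_mu inc mu) in
  ((mu = 2%N -> (97 <= q)%N -> (s <= bound_D q (24 / 10))%R) /\
   (mu = 3%N -> (181 <= q)%N -> (s <= bound_D q (26 / 10))%R) /\
   (mu = 4%N -> (125 <= q)%N -> (s <= bound_D q (28 / 10))%R) /\
   ((INR mu <= sqrt (INR q))%R -> (4 <= q)%N -> (s <= bound_D q (INR mu + 1))%R) /\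
   ((INR mu <= 1 / 2 * ((1 - delta_q q) * INR q - delta_q q + 1) + 1)%R ->
      (3 <= q)%N -> (s <= bound_D q (2 * INR mu - 1))%R)).
Proof.
move=> pp hord mu2 s; rewrite /s.
split; [|split; [|split; [|split]]].
- move=> e q97; subst mu.
  have q3 : (3 <= q)%N by apply: leq_trans q97.
  have [L1 [S2 _]] := facts q3.
  apply: generic => //; (first [exact: ltnW | lra | (rewrite /=; nra)]).
- move=> e q97; subst mu.
  have q3 : (3 <= q)%N by apply: leq_trans q97.
  have [L1 [S2 _]] := facts q3.
  apply: generic => //; (first [exact: ltnW | lra | (rewrite /=; nra)]).
- move=> e q125; subst mu.
  have q3 : (3 <= q)%N by apply: leq_trans q125.
  have [L1 [S2 n4]] := facts q3.
  have L2 : (2 <= ln (INR (addn q 1)))%R.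
    apply: ln_ge2.
    have h := le_INR 125 q (elimT leP q125).
    have e : INR 125 = 125%R by rewrite INR_IZR_INZ.
    rewrite e in h; rewrite addn1 S_INR; lra.
  apply: generic => //; (first [by apply: leq_trans _ q125 | lra | (rewrite /=; nra)]).
- move=> hm q4.
  have q3 : (3 <= q)%N by apply: leq_trans q4.
  have [L1 [S2 n4]] := facts q3.
  have q4R : (4 <= INR q)%R by have := le_INR 4 q (elimT leP q4); rewrite /=; lra.
  have m2R : (2 <= INR mu)%R by have := le_INR 2 mu (elimT leP mu2); rewrite /=; lra.
  have sq : (sqrt (INR q) <= INR q)%R.
    have h1 := sqrt_sqrt (INR q) ltac:(lra).
    have h2 : (1 <= sqrt (INR q))%R.
      rewrite -sqrt_1; apply: sqrt_le_1_alt; lra.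
    nra.
  have muq : (mu <= q)%N by apply: nat_le_of_R; lra.
  have e1 := INR_pred (leq_trans (isT : (0 < 2)%N) mu2).
  apply: generic => //; rewrite ?e1; [lra | nra | nra].
- move=> hm q3.
  have [L1 [S2 n4]] := facts q3.
  have q3R : (3 <= INR q)%R by have := le_INR 3 q (elimT leP q3); rewrite /=; lra.
  have m2R : (2 <= INR mu)%R by have := le_INR 2 mu (elimT leP mu2); rewrite /=; lra.
  have d0 : (0 <= delta_q q)%R.
    rewrite /delta_q; apply: Rlt_le; apply: Rdiv_lt_0_compat; lra.
  have e1 := INR_pred (leq_trans (isT : (0 < 2)%N) mu2).
  have dq := Rmult_le_pos _ _ d0 (pos_INR q).
  have muq : (mu <= q)%N by apply: nat_le_of_R; lra.
  apply: generic => //; rewrite ?e1; [lra | | ].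
    have h := Rmult_le_compat_l (2 * INR mu - 1) _ _ ltac:(lra) S2; lra.
  set c := ((2 * INR mu - 1) ^ 2 - (INR mu - 1) - 2)%R.
  have c6 : (INR mu <= c)%R by rewrite /c; nra.
  have h := Rmult_le_compat_l c _ _ ltac:(lra) L1.
  lra.
Qed.
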